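(* Let $n\ge 1$ and let $\mathcal{A}$ be the real central hyperplane arrangement in $\mathbb{R}^{n+1}$ consisting of the hyperplanes $\{x_i=x_j\}$ and $\{x_i=-x_j\}$ for $1\le i<j\le n+1$, together with the hyperplane $\{x_1=0\}$. Then $\mathcal{A}$ is simplicial, i.e. every chamber (connected component of the complement of the union of the hyperplanes in $\mathbb{R}^{n+1}$) is an open simplicial cone. *)

(* Defs.v *)
From mathcomp Require Import all_boot.
From Stdlib Require Import Reals.

Set Implicit Arguments.
Unset Strict Implicit.
Unset Printing Implicit Defensive.

(* Points of R^(n+1): coordinates indexed by 'I_(n.+1); paper's x_1 is x ord0. *)
Definition pt (n : nat) := 'I_n.+1 -> R.

(* Open sets of R^(n+1) (sup-norm balls; same topology as Euclidean). *)
Definition is_open (n : nat) (U : pt n -> Prop) : Prop :=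
  forall x, U x -> exists eps : R, (0 < eps)%R /\
    forall y : pt n, (forall i, (Rabs (y i - x i) < eps)%R) -> U y.

Definition connected (n : nat) (S : pt n -> Prop) : Prop :=
  ~ exists U V : pt n -> Prop,
      is_open U /\ is_open V /\
      (forall x, S x -> U x \/ V x) /\
      (exists x, S x /\ U x) /\ (exists x, S x /\ V x) /\
      (forall x, S x -> U x -> V x -> False).

Definition arr_complement (n : nat) (x : pt n) : Prop :=
  x ord0 <> 0%R /\
  forall i j : 'I_n.+1, (i < j)%N -> x i <> x j /\ x i <> (- x j)%R.

Definition is_chamber (n : nat) (C : pt n -> Prop) : Prop :=
  (exists x, C x) /\
  (forall x, C x -> arr_complement x) /\
  connected C /\
  (forall D : pt n -> Prop,
      (forall x, C x -> D x) -> (forall x, D x -> arr_complement x) ->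
      connected D -> forall x, D x -> C x).

Definition rsum (n : nat) (f : 'I_n.+1 -> R) : R := \big[Rplus/0%R]_(k < n.+1) f k.

Definition open_simplicial_cone (n : nat) (C : pt n -> Prop) : Prop :=
  exists v : 'I_n.+1 -> pt n,
    (forall c : 'I_n.+1 -> R,
        (forall i, rsum (fun k => (c k * v k i)%R) = 0%R) -> forall k, c k = 0%R) /\
    (forall x : pt n,
        C x <-> exists c : 'I_n.+1 -> R,
                  (forall k, (0 < c k)%R) /\
                  forall i, x i = rsum (fun k => (c k * v k i)%R)).

(* Main.v *)
Require Import Defs.

From HB Require Import structures.
From mathcomp Require Import all_boot.
From Stdlib Require Import Reals Lra Classical.
Set Implicit Arguments.
Unset Strict Implicit.
Open Scope R_scope.

Lemma conn01 (P Q : R -> Prop) :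
  (forall t, P t -> exists d, 0 < d /\ forall s, Rabs (s - t) < d -> P s) ->
  (forall t, Q t -> exists d, 0 < d /\ forall s, Rabs (s - t) < d -> Q s) ->
  (forall t, 0 <= t <= 1 -> P t \/ Q t) -> P 0 -> Q 1 ->
  (forall t, 0 <= t <= 1 -> P t -> Q t -> False) -> False.
Proof.
intros oP oQ cov P0 Q1 disj.
set E := fun t => 0 <= t <= 1 /\ forall s, 0 <= s <= t -> P s.
assert (bE : bound E) by (exists 1; intros t [Ht _]; lra).
assert (E0 : exists t, E t).
{ exists 0; split; [lra|]. intros s Hs. replace s with 0 by lra. exact P0. }
destruct (completeness E bE E0) as [m [ub lub]].
assert (m0 : 0 <= m) by (apply ub; split; [lra|]; intros s Hs; replace s with 0 by lra; exact P0).
assert (m1 : m <= 1) by (apply lub; intros t [Ht _]; lra).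
assert (F : forall s, 0 <= s < m -> P s).
{ intros s Hs. destruct (classic (exists t, E t /\ s <= t)) as [[t [[Ht Ht2] Hst]]|Hn].
  - apply Ht2; lra.
  - exfalso. assert (m <= s); [|lra]. apply lub. intros t Et.
    destruct (Rle_dec t s) as [h|h]; [exact h|]. exfalso; apply Hn; exists t; split; [exact Et|lra]. }
destruct (cov m (conj m0 m1)) as [Pm|Qm].
- destruct (oP m Pm) as [d [d0 Hd]].
  set t' := Rmin (m + d/2) 1.
  assert (Et : E t').
  { unfold t', Rmin; destruct (Rle_dec (m + d/2) 1); split; try lra;
    intros s Hs; (destruct (Rlt_dec s m); [apply F; lra| apply Hd; unfold Rabs; destruct (Rcase_abs (s-m)); lra]). }
  have := ub _ Et. unfold t', Rmin; destruct (Rle_dec (m + d/2) 1); intro H; [lra|].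
  assert (m = 1) by lra. subst m. apply (disj 1); [lra|exact Pm|exact Q1].
- destruct (Req_dec m 0) as [->|mn0].
  + apply (disj 0); [lra|exact P0|exact Qm].
  + destruct (oQ m Qm) as [d [d0 Hd]].
    set s := Rmax 0 (m - d/2).
    assert (s0 : 0 <= s < m) by (unfold s, Rmax; destruct (Rle_dec 0 (m - d/2)); lra).
    apply (disj s); [lra| apply F; exact s0| apply Hd; unfold s, Rmax, Rabs;
      destruct (Rle_dec 0 (m - d/2)); destruct (Rcase_abs _); lra].
Qed.

Lemma bound_nat (N : nat) (g : nat -> R) :
  exists M, 0 < M /\ forall j, (j <= N)%nat -> Rabs (g j) <= M.
Proof.
elim: N => [|N [M [M0 HM]]].
- exists (Rabs (g O) + 1); split; [have := Rabs_pos (g O); lra|].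
  intros j; rewrite leqn0 => /eqP ->; lra.
- exists (Rmax M (Rabs (g N.+1))); split.
  + unfold Rmax; destruct (Rle_dec M (Rabs (g N.+1))); [have := Rabs_pos (g N.+1)|]; lra.
  + intros j; rewrite leq_eqVlt => /orP [/eqP ->|Hj].
    * apply Rmax_r.
    * eapply Rle_trans; [apply HM; exact Hj|apply Rmax_l].
Qed.

Lemma bound_ord (n : nat) (f : 'I_n.+1 -> R) :
  exists M, 0 < M /\ forall i, Rabs (f i) <= M.
Proof.
destruct (bound_nat n (fun j => f (inord j))) as [M [M0 HM]].
exists M; split; [exact M0|]. intros i. have := HM i (ltn_ord i). by rewrite inord_val.
Qed.

Lemma convex_connected (n : nat) (S : pt n -> Prop) :
  (forall a b t, S a -> S b -> 0 <= t <= 1 -> S (fun i => a i + t * (b i - a i))) ->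
  connected S.
Proof.
intros cvx [U [V [oU [oV [cov [[a [Sa Ua]] [[b [Sb Vb]] disj]]]]]]].
destruct (bound_ord (fun i => b i - a i)) as [M [M0 HM]].
set g := fun t (i : 'I_n.+1) => a i + t * (b i - a i).
assert (op : forall W : pt n -> Prop, is_open W -> forall t, W (g t) ->
   exists d, 0 < d /\ forall s, Rabs (s - t) < d -> W (g s)).
{ intros W oW t Wt. destruct (oW _ Wt) as [e [e0 He]]. exists (e / M); split.
  - apply Rdiv_lt_0_compat; lra.
  - intros s Hs. apply He. intros i.
    replace (g s i - g t i) with ((s - t) * (b i - a i)) by (unfold g; ring).
    rewrite Rabs_mult.
    apply Rle_lt_trans with (Rabs (s - t) * M).
    + apply Rmult_le_compat_l; [apply Rabs_pos|apply HM].
    + apply Rmult_lt_compat_r with (r := M) in Hs; [|lra].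
      replace (e / M * M) with e in Hs by (field; lra). exact Hs. }
apply (@conn01 (fun t => U (g t)) (fun t => V (g t))).
- exact (op U oU).
- exact (op V oV).
- intros t Ht. apply cov. apply cvx; assumption.
- destruct (oU _ Ua) as [e [e0 He]]. apply He. intros i. unfold g.
  replace (a i + 0 * (b i - a i) - a i) with 0 by ring. rewrite Rabs_R0; lra.
- destruct (oV _ Vb) as [e [e0 He]]. apply He. intros i. unfold g.
  replace (a i + 1 * (b i - a i) - b i) with 0 by ring. rewrite Rabs_R0; lra.
- intros t Ht Ut Vt. apply (disj (g t)); [apply cvx; assumption|assumption|assumption].
Qed.

Lemma neg_abs_le (u : R) : - Rabs u <= u.
Proof. have := Rle_abs (- u). rewrite Rabs_Ropp. lra. Qed.

Lemma open_lin (n : nat) (i j : 'I_n.+1) (al be : R) :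
  is_open (fun z : pt n => 0 < al * z i + be * z j).
Proof.
intros z Hz. cbv beta in Hz.
assert (K0 : 0 < Rabs al + Rabs be + 1) by (have := Rabs_pos al; have := Rabs_pos be; lra).
remember (al * z i + be * z j) as d eqn:Ed.
remember (Rabs al + Rabs be + 1) as K eqn:EK.
exists (d / K). split; [apply Rdiv_lt_0_compat; lra|].
intros y Hy.
assert (H1 : Rabs (al * (y i - z i)) <= Rabs al * (d / K)).
{ rewrite Rabs_mult. apply Rmult_le_compat_l; [apply Rabs_pos|]. left; apply Hy. }
assert (H2 : Rabs (be * (y j - z j)) <= Rabs be * (d / K)).
{ rewrite Rabs_mult. apply Rmult_le_compat_l; [apply Rabs_pos|]. left; apply Hy. }
have H3 := neg_abs_le (al * (y i - z i)).
have H4 := neg_abs_le (be * (y j - z j)).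
assert (HK : d = (Rabs al + Rabs be + 1) * (d / K)) by (rewrite EK; field; lra).
assert (dK : 0 < d / K) by (apply Rdiv_lt_0_compat; lra).
assert (Ey : al * y i + be * y j = d + al * (y i - z i) + be * (y j - z j)) by (rewrite Ed; ring).
cbv beta. rewrite Ey.
remember (d / K) as e eqn:Ee.
assert (HK' : d = Rabs al * e + Rabs be * e + e) by (rewrite {1}HK; ring).
lra.
Qed.
Lemma Rplus_assoc' : associative Rplus. Proof. intros a b c; ring. Qed.
HB.instance Definition _ := Monoid.isComLaw.Build R 0 Rplus Rplus_assoc' Rplus_comm Rplus_0_l.

Lemma big_to_sum (N : nat) (F : nat -> R) :
  \big[Rplus/0]_(k < N.+1) F (nat_of_ord k) = sum_f_R0 F N.
Proof.
elim: N => [|N IH].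
- by rewrite big_ord_recr big_ord0 /= Rplus_0_l.
- rewrite big_ord_recr /= IH. reflexivity.
Qed.

Lemma big_scal (N : nat) (a : R) (F : 'I_N -> R) :
  \big[Rplus/0]_(k < N) (a * F k) = a * \big[Rplus/0]_(k < N) F k.
Proof.
elim: N F => [|N IH] F.
- rewrite !big_ord0. symmetry; apply Rmult_0_r.
- rewrite !big_ord_recr /= IH. symmetry; apply Rmult_plus_distr_l.
Qed.

Lemma rsum_scal (n : nat) (a : R) (c f : 'I_n.+1 -> R) :
  rsum (fun k => c k * (a * f k)) = a * rsum (fun k => c k * f k).
Proof.
rewrite /rsum -big_scal. apply eq_bigr => k _. ring.
Qed.

Definition WA (j m : nat) : R := if (j <= m)%nat then 1 else 0.
Definition WB (j m : nat) : R :=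
  match m with
  | O => match j with O => 1 | 1 => -1 | _ => 0 end
  | _ => WA j m end.

Lemma L1 (c : nat -> R) m N : (N <= m)%nat ->
  sum_f_R0 (fun j => c j * WA j m) N = sum_f_R0 c N.
Proof.
elim: N => [|N IH] H.
- rewrite /= /WA leq0n; ring.
- rewrite /= IH; [|exact: ltnW]. rewrite /WA H; ring.
Qed.

Lemma L2 (c : nat -> R) m N : (m <= N)%nat ->
  sum_f_R0 (fun j => c j * WA j m) N = sum_f_R0 c m.
Proof.
elim: N => [|N IH] H.
- move: H; rewrite leqn0 => /eqP ->. by rewrite L1.
- move: H; rewrite leq_eqVlt => /orP [/eqP ->|H]; first by rewrite L1.
  rewrite /= IH //. rewrite /WA. have -> : (N.+1 <= m)%nat = false.
  { apply/negbTE. by rewrite -ltnNge. }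
  ring.
Qed.

Lemma LB0 (c : nat -> R) N : (1 <= N)%nat ->
  sum_f_R0 (fun j => c j * WB j 0) N = c O - c 1%nat.
Proof.
elim: N => [|N IH] H; first by [].
case: N IH H => [|N] IH H.
- rewrite /=; ring.
- change (sum_f_R0 (fun j => c j * WB j 0) N.+1 + c N.+2 * WB N.+2 0 = c O - c 1%nat).
  rewrite IH //. rewrite /WB; ring.
Qed.

Lemma Ppos (c : nat -> R) : (forall j, 0 < c j) -> forall m, 0 < sum_f_R0 c m.
Proof.
move=> H; elim => [|m IH] /=; [exact: H|]. have := H m.+1; lra.
Qed.

Lemma Plt (c : nat -> R) : (forall j, 0 < c j) -> forall k l, (k < l)%nat ->
  sum_f_R0 c k < sum_f_R0 c l.
Proof.
move=> H k; elim => [|l IH] //= Hl.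
move: Hl; rewrite ltnS leq_eqVlt => /orP [/eqP ->|Hl].
- have := H l.+1; lra.
- have := IH Hl; have := H l.+1; lra.
Qed.

Definition Pst (A : bool) (n : nat) (y : nat -> R) : Prop :=
  (forall k l, (k < l)%nat -> (l <= n)%nat -> Rabs (y k) < y l) /\ (A -> 0 < y O).

Definition dA (y : nat -> R) (j : nat) : R :=
  match j with O => y O | S j' => y (S j') - y j' end.
Definition dB (y : nat -> R) (j : nat) : R :=
  match j with O => (y 1%nat + y O) / 2 | 1 => (y 1%nat - y O) / 2
  | S j' => y (S j') - y j' end.

Lemma telA (y : nat -> R) m : sum_f_R0 (dA y) m = y m.
Proof. elim: m => [|m IH] //=. rewrite IH; ring. Qed.

Lemma telB (y : nat -> R) m : (1 <= m)%nat -> sum_f_R0 (dB y) m = y m.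
Proof.
elim: m => [|m IH] // _. case: m IH => [|m] IH.
- rewrite /=; field.
- change (sum_f_R0 (dB y) m.+1 + dB y m.+2 = y m.+2).
  rewrite IH //. rewrite /dB; ring.
Qed.

Lemma abs_lt (u v : R) : Rabs u < v -> u < v.
Proof. have := Rle_abs u; lra. Qed.
Lemma abs_lt' (u v : R) : Rabs u < v -> - u < v.
Proof. have := Rle_abs (- u); rewrite Rabs_Ropp; lra. Qed.

Lemma coneA n :
 (forall c, (forall m, (m <= n)%nat -> sum_f_R0 (fun j => c j * WA j m) n = 0) ->
     forall j, (j <= n)%nat -> c j = 0) /\
 (forall y, Pst true n y -> (forall j, (j <= n)%nat -> 0 < dA y j) /\
     forall m, (m <= n)%nat -> y m = sum_f_R0 (fun j => dA y j * WA j m) n) /\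
 (forall c y, (forall j, 0 < c j) ->
     (forall m, (m <= n)%nat -> y m = sum_f_R0 (fun j => c j * WA j m) n) -> Pst true n y).
Proof.
split; [|split].
- move=> c H j Hj. have Hs : forall m, (m <= n)%nat -> sum_f_R0 c m = 0.
  { move=> m Hm. rewrite -(L2 c Hm). exact: H. }
  case: j Hj => [|j] Hj.
  + have := Hs O Hj. by [].
  + have := Hs j.+1 Hj. have := Hs j (ltnW Hj). rewrite /=. lra.
- move=> y [Hp H0]. split.
  + case=> [|j] Hj /=; first exact: H0.
    have := abs_lt (Hp j j.+1 (ltnSn j) Hj). lra.
  + move=> m Hm. by rewrite L2 // telA.
- move=> c y Hc Hy. split.
  + move=> k l Hkl Hl. rewrite (Hy k (ltnW (leq_trans Hkl Hl))) (Hy l Hl) !L2 //;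
      [|exact: ltnW (leq_trans Hkl Hl)].
    rewrite Rabs_right; [|left; exact: Ppos]. exact: Plt.
  + move=> _. rewrite Hy // L2 //. exact: Hc.
Qed.

Lemma coneB n : (1 <= n)%nat ->
 (forall c, (forall m, (m <= n)%nat -> sum_f_R0 (fun j => c j * WB j m) n = 0) ->
     forall j, (j <= n)%nat -> c j = 0) /\
 (forall y, Pst false n y -> (forall j, (j <= n)%nat -> 0 < dB y j) /\
     forall m, (m <= n)%nat -> y m = sum_f_R0 (fun j => dB y j * WB j m) n) /\
 (forall c y, (forall j, 0 < c j) ->
     (forall m, (m <= n)%nat -> y m = sum_f_R0 (fun j => c j * WB j m) n) -> Pst false n y).
Proof.
move=> hn. split; [|split].
- move=> c H j Hj. have Hs : forall m, (1 <= m)%nat -> (m <= n)%nat -> sum_f_R0 c m = 0.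
  { move=> [|m] // _ Hm. rewrite -(L2 c Hm). exact (H m.+1 Hm). }
  have H0 := H O (leq0n n). rewrite LB0 // in H0.
  have H1 := Hs 1%nat (leqnn 1) hn. rewrite /= in H1.
  case: j Hj => [|[|j]] Hj.
  + lra.
  + lra.
  + have E1 := Hs j.+2 isT Hj. have E2 := Hs j.+1 isT (ltnW Hj).
    change (sum_f_R0 c j.+1 + c j.+2 = 0) in E1. lra.
- move=> y [Hp _]. split.
  + case=> [|[|j]] Hj /=.
    * have := Hp O 1%nat isT hn. have := abs_lt' (Hp O 1%nat isT hn). have := abs_lt (Hp O 1%nat isT hn). lra.
    * have := abs_lt (Hp O 1%nat isT hn). lra.
    * have := abs_lt (Hp j.+1 j.+2 (ltnSn _) Hj). lra.
  + case=> [|m] Hm.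
    * rewrite LB0 //=. field.
    * rewrite [WB]lock /= -lock. 
      change (y m.+1 = sum_f_R0 (fun j : nat => dB y j * WA j m.+1) n).
      by rewrite L2 // telB.
- move=> c y Hc Hy.
  have Hy1 : forall m, (1 <= m)%nat -> (m <= n)%nat -> y m = sum_f_R0 c m.
  { move=> [|m] // _ Hm. rewrite (Hy _ Hm). exact: L2. }
  have Hy0 : y O = c O - c 1%nat by rewrite Hy // LB0.
  split; last by [].
  move=> [|k] l Hkl Hl.
  + rewrite Hy0 (Hy1 l Hkl Hl).
    have H1 : c O + c 1%nat <= sum_f_R0 c l.
    { move: Hkl; rewrite leq_eqVlt => /orP [/eqP <-|H]; first by (simpl; lra).
      left. exact: (Plt Hc H). }
    have := Hc O; have := Hc 1%nat.
    unfold Rabs; destruct Rcase_abs; lra.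
  + rewrite (Hy1 k.+1 isT (ltnW (leq_trans Hkl Hl))) (Hy1 l (ltn_trans (ltn0Sn k) Hkl) Hl).
    rewrite Rabs_right; [|left; exact: Ppos]. exact: Plt.
Qed.

Lemma rsum_conv n (c : 'I_n.+1 -> R) (W : nat -> nat -> R) m : (m <= n)%nat ->
  rsum (fun k => c k * W (nat_of_ord k) (nat_of_ord (inord m : 'I_n.+1))) =
  sum_f_R0 (fun j => c (inord j) * W j m) n.
Proof.
move=> Hm. rewrite -big_to_sum /rsum. apply eq_bigr => k _.
by rewrite inord_val inordK.
Qed.

Lemma ord_cone n (W : nat -> nat -> R) (P : (nat -> R) -> Prop) (d : (nat -> R) -> nat -> R) :
 (forall c, (forall m, (m <= n)%nat -> sum_f_R0 (fun j => c j * W j m) n = 0) ->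
     forall j, (j <= n)%nat -> c j = 0) ->
 (forall y, P y -> (forall j, (j <= n)%nat -> 0 < d y j) /\
     forall m, (m <= n)%nat -> y m = sum_f_R0 (fun j => d y j * W j m) n) ->
 (forall c y, (forall j, 0 < c j) ->
     (forall m, (m <= n)%nat -> y m = sum_f_R0 (fun j => c j * W j m) n) -> P y) ->
 (forall c : 'I_n.+1 -> R, (forall m : 'I_n.+1, rsum (fun k => c k * W k m) = 0) -> forall k, c k = 0) /\
 (forall y : nat -> R, P y <-> exists c : 'I_n.+1 -> R, (forall k, 0 < c k) /\
     forall m : 'I_n.+1, y m = rsum (fun k => c k * W k m)).
Proof.
move=> h1 h2 h3. split.
- move=> c H k.
  have Hs : forall m, (m <= n)%nat -> sum_f_R0 (fun j => c (inord j) * W j m) n = 0.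
  { move=> m Hm. by rewrite -rsum_conv //; apply: H. }
  have := h1 (fun j => c (inord j)) Hs k (ltn_ord k). by rewrite inord_val.
- move=> y. split.
  + move=> Py. have [hp hy] := h2 y Py. exists (fun k => d y (nat_of_ord k)). split.
    * move=> k. apply: hp. by rewrite -ltnS ltn_ord.
    * move=> m. rewrite hy; [|by rewrite -ltnS ltn_ord]. rewrite -big_to_sum. reflexivity.
  + move=> [c [hc hy]]. apply: (h3 (fun j => c (inord j))).
    * move=> j; exact: hc.
    * move=> m Hm. rewrite -rsum_conv // -hy. by rewrite inordK.
Qed.

Lemma std_cone n (hn : (1 <= n)%nat) (A : bool) : exists W : nat -> nat -> R,
 (forall c : 'I_n.+1 -> R, (forall m : 'I_n.+1, rsum (fun k => c k * W k m) = 0) -> forall k, c k = 0) /\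
 (forall y : nat -> R, Pst A n y <-> exists c : 'I_n.+1 -> R, (forall k, 0 < c k) /\
     forall m : 'I_n.+1, y m = rsum (fun k => c k * W k m)).
Proof.
case: A.
- exists WA. have [a1 [a2 a3]] := coneA n. exact: (ord_cone a1 a2 a3).
- exists WB. have [a1 [a2 a3]] := coneB hn. exact: (ord_cone a1 a2 a3).
Qed.

Definition Kp n (x0 x : pt n) : Prop :=
  0 < x ord0 * x0 ord0 /\ forall i j : 'I_n.+1, i != j ->
    0 < (x i - x j) * (x0 i - x0 j) /\ 0 < (x i + x j) * (x0 i + x0 j).

Lemma compl_ne n (z : pt n) (i j : 'I_n.+1) : arr_complement z -> i != j ->
  z i <> z j /\ z i <> - z j.
Proof.
move=> [_ H] hij. have [h|h|h] := ltngtP i j.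
- exact: H.
- have [a b] := H j i h. split; intro E; [apply a | apply b]; lra.
- exfalso; move/negP: hij; apply; apply/eqP; exact: val_inj h.
Qed.

Lemma sep n (C : pt n -> Prop) (Cc : connected C) (i j : 'I_n.+1) (al be : R) (x0 x : pt n) :
  (forall z, C z -> al * z i + be * z j <> 0) -> C x0 -> C x ->
  0 < al * x0 i + be * x0 j -> 0 < al * x i + be * x j.
Proof.
move=> H Cx0 Cx Hx0.
destruct (Rlt_dec 0 (al * x i + be * x j)) as [h|h]; [exact h|]. exfalso; apply Cc.
exists (fun z => 0 < al * z i + be * z j), (fun z => 0 < (-al) * z i + (-be) * z j).
split; [apply open_lin|]. split; [apply open_lin|]. split.
{ move=> z Cz. have := H z Cz => Hz.
  destruct (Rtotal_order 0 (al * z i + be * z j)) as [a|[a|a]]; [left; exact a|lra|right; lra]. }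
split; [exists x0; split; assumption|]. split.
{ exists x; split; [assumption|]. cbv beta. have : al * x i + be * x j <> 0 by apply H. lra. }
move=> z _ a b. lra.
Qed.

Lemma cvx_pos (A B t : R) : 0 < A -> 0 < B -> 0 <= t <= 1 -> 0 < (1 - t) * A + t * B.
Proof. intros; nra. Qed.

Lemma chamber_eq n (C : pt n -> Prop) (x0 : pt n) : is_chamber C -> C x0 ->
  forall x, C x <-> Kp x0 x.
Proof.
move=> [_ [Ccomp [Cconn Cmax]]] Cx0.
have x0c := Ccomp x0 Cx0.
have fwd : forall x, C x -> Kp x0 x.
{ move=> x Cx. split.
  - have := @sep n C Cconn ord0 ord0 (x0 ord0) 0 x0 x.
    have nz : x0 ord0 <> 0 by case: x0c.
    move=> Hs. have : 0 < x0 ord0 * x ord0 + 0 * x ord0; [|nra].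
    apply Hs => //.
    + move=> z Cz. have : z ord0 <> 0 by case: (Ccomp z Cz).
      move=> h. replace (x0 ord0 * z ord0 + 0 * z ord0) with (x0 ord0 * z ord0) by ring.
      exact: Rmult_integral_contrapositive_currified.
    + have := Rsqr_pos_lt _ nz. rewrite /Rsqr. lra.
  - move=> i j hij. have [d1 d2] := compl_ne x0c hij. split.
    + have := @sep n C Cconn i j (x0 i - x0 j) (-(x0 i - x0 j)) x0 x.
      move=> Hs. have : 0 < (x0 i - x0 j) * x i + - (x0 i - x0 j) * x j; [|nra].
      apply Hs => //.
      * move=> z Cz. have [e1 _] := compl_ne (Ccomp z Cz) hij.
        replace ((x0 i - x0 j) * z i + - (x0 i - x0 j) * z j) with ((x0 i - x0 j) * (z i - z j)) by ring.
        apply: Rmult_integral_contrapositive_currified; lra.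
      * have : x0 i - x0 j <> 0 by lra. move=> nz. have := Rsqr_pos_lt _ nz. rewrite /Rsqr. lra.
    + have := @sep n C Cconn i j (x0 i + x0 j) (x0 i + x0 j) x0 x.
      move=> Hs. have : 0 < (x0 i + x0 j) * x i + (x0 i + x0 j) * x j; [|nra].
      apply Hs => //.
      * move=> z Cz. have [_ e2] := compl_ne (Ccomp z Cz) hij.
        replace ((x0 i + x0 j) * z i + (x0 i + x0 j) * z j) with ((x0 i + x0 j) * (z i + z j)) by ring.
        apply: Rmult_integral_contrapositive_currified; lra.
      * have : x0 i + x0 j <> 0 by lra. move=> nz. have := Rsqr_pos_lt _ nz. rewrite /Rsqr. lra. }
move=> x. split; [exact: fwd|]. move=> Kx. apply: (Cmax (Kp x0)) => //.
- move=> z [h0 h]. split.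
  + move=> E. rewrite E in h0. lra.
  + move=> i j hij. have nij : i != j by apply/eqP => E; rewrite E ltnn in hij.
    have [a b] := h i j nij. split; move=> E; [rewrite E in a|rewrite E in b]; nra.
- apply: convex_connected. move=> a b t [a0 ha] [b0 hb] ht. split.
  + replace ((a ord0 + t * (b ord0 - a ord0)) * x0 ord0) with
      ((1 - t) * (a ord0 * x0 ord0) + t * (b ord0 * x0 ord0)) by ring.
    exact: cvx_pos.
  + move=> i j hij. have [a1 a2] := ha i j hij. have [b1 b2] := hb i j hij. split.
    * replace ((a i + t * (b i - a i) - (a j + t * (b j - a j))) * (x0 i - x0 j)) with
        ((1 - t) * ((a i - a j) * (x0 i - x0 j)) + t * ((b i - b j) * (x0 i - x0 j))) by ring.
      exact: cvx_pos.
    * replace ((a i + t * (b i - a i) + (a j + t * (b j - a j))) * (x0 i + x0 j)) with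
        ((1 - t) * ((a i + a j) * (x0 i + x0 j)) + t * ((b i + b j) * (x0 i + x0 j))) by ring.
      exact: cvx_pos.
Qed.

Definition sgn (v : R) : R := if Rlt_dec 0 v then 1 else -1.

Lemma sgn_pm v : sgn v = 1 \/ sgn v = -1.
Proof. rewrite /sgn; destruct (Rlt_dec 0 v); [left|right]; reflexivity. Qed.

Lemma sgn_pos v : 0 < v -> sgn v = 1.
Proof. rewrite /sgn; by case: Rlt_dec. Qed.
Lemma sgn_neg v : ~ 0 < v -> sgn v = -1.
Proof. rewrite /sgn; by case: Rlt_dec. Qed.

Lemma sgn_abs v : v <> 0 -> 0 < sgn v * v.
Proof.
move=> h. destruct (Rlt_dec 0 v) as [a|a].
- rewrite sgn_pos //; lra.
- rewrite sgn_neg //. destruct (Rtotal_order v 0) as [b|[b|b]]; try lra; exfalso; apply h; exact b.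
Qed.

Lemma sgn_lem u v : Rabs u < Rabs v -> 0 < sgn v * (v - u) /\ 0 < sgn v * (v + u).
Proof.
destruct (Rlt_dec 0 v) as [a|a]; [rewrite sgn_pos // | rewrite sgn_neg //];
unfold Rabs; destruct (Rcase_abs u); destruct (Rcase_abs v); intros; lra.
Qed.

Lemma prod_pos s a b : (s = 1 \/ s = -1) -> 0 < a * b -> 0 < s * b -> 0 < s * a.
Proof. move=> [->| ->] h1 h2; nra. Qed.

Lemma prod_pos2 s a b : (s = 1 \/ s = -1) -> 0 < s * a -> 0 < s * b -> 0 < a * b.
Proof. move=> [->| ->] h1 h2; nra. Qed.

Lemma abs_sgn v w : Rabs (sgn v * w) = Rabs w.
Proof. rewrite Rabs_mult. case: (sgn_pm v) => ->; [rewrite Rabs_R1|rewrite Rabs_Ropp Rabs_R1]; ring. Qed.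

Definition ltb (u v : R) : bool := if Rlt_dec u v then true else false.
Lemma ltbT u v : u < v -> ltb u v = true.
Proof. rewrite /ltb; by case: Rlt_dec. Qed.
Lemma ltbF u v : ~ u < v -> ltb u v = false.
Proof. rewrite /ltb; by case: Rlt_dec. Qed.

Definition rk n (x0 : pt n) (i : 'I_n.+1) : 'I_n.+1 :=
  inord #|[pred j | ltb (Rabs (x0 j)) (Rabs (x0 i))]|.

Lemma rk_val n (x0 : pt n) i :
  nat_of_ord (rk x0 i) = #|[pred j | ltb (Rabs (x0 j)) (Rabs (x0 i))]|.
Proof.
rewrite /rk inordK //.
set A := [pred j | ltb (Rabs (x0 j)) (Rabs (x0 i))].
have E := cardC A. rewrite card_ord in E.
have : (#|A| < #|A| + #|[predC A]|)%nat; last by rewrite E.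
have : (0 < #|[predC A]|)%nat.
{ apply/card_gt0P. exists i. rewrite !inE ltbF //. lra. }
move=> h. by rewrite -{1}(addn0 #|A|) ltn_add2l.
Qed.

Lemma rk_lt n (x0 : pt n) p q : Rabs (x0 p) < Rabs (x0 q) -> (rk x0 p < rk x0 q)%nat.
Proof.
move=> h. rewrite !rk_val. apply: proper_card. apply/properP. split.
- apply/subsetP => j. rewrite !inE.
  destruct (Rlt_dec (Rabs (x0 j)) (Rabs (x0 p))) as [a|a].
  + rewrite ltbT // ltbT //. lra.
  + by rewrite ltbF.
- exists p; rewrite !inE.
  + by rewrite ltbT.
  + rewrite ltbF //. lra.
Qed.

Lemma rk_lt_inv n (x0 : pt n) :
  (forall p q, p != q -> Rabs (x0 p) <> Rabs (x0 q)) ->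
  forall p q, (rk x0 p < rk x0 q)%nat -> Rabs (x0 p) < Rabs (x0 q).
Proof.
move=> dist p q h. destruct (Rtotal_order (Rabs (x0 p)) (Rabs (x0 q))) as [a|[a|a]] => //.
- case: (eqVneq p q) => [E|ne].
  + by rewrite E ltnn in h.
  + by exfalso; apply: (dist p q ne).
- have := rk_lt a. rewrite ltnNge. move/negP; case. exact: ltnW.
Qed.

Lemma key n (x0 : pt n) (rk pi : 'I_n.+1 -> 'I_n.+1)
  (pi_rk : forall i, pi (rk i) = i) (rk_pi : forall m, rk (pi m) = m)
  (hlt : forall p q, (rk p < rk q)%nat -> Rabs (x0 p) < Rabs (x0 q))
  (x0c : arr_complement x0) (x : pt n) :
  Kp x0 x <-> Pst (nat_of_ord (rk ord0) == 0%nat) n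
                  (fun m => sgn (x0 (pi (inord m))) * x (pi (inord m))).
Proof.
have nz0 : x0 ord0 <> 0 by case: x0c.
have aux : forall p q, (rk p < rk q)%nat ->
   0 < sgn (x0 q) * (x q - x p) -> 0 < sgn (x0 q) * (x q + x p) ->
   0 < (x q - x p) * (x0 q - x0 p) /\ 0 < (x q + x p) * (x0 q + x0 p).
{ move=> p q h a1 a2. have [s1 s2] := sgn_lem (hlt _ _ h).
  split; exact: (prod_pos2 (sgn_pm (x0 q))). }
split.
- move=> [H0 Hij]. split.
  + move=> k l hkl hl /=.
    have hk : (k <= n)%nat by apply: ltnW (leq_trans hkl hl).
    set p := pi (inord k); set q := pi (inord l).
    have hpq : (rk p < rk q)%nat by rewrite /p /q !rk_pi !inordK.
    have [s1 s2] := sgn_lem (hlt _ _ hpq).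
    have npq : q != p by apply/eqP => E; rewrite E ltnn in hpq.
    have [h1 h2] := Hij q p npq.
    have sq := sgn_pm (x0 q).
    have a1 := prod_pos sq h1 s1. have a2 := prod_pos sq h2 s2.
    rewrite abs_sgn. case: sq a1 a2 => -> a1 a2; unfold Rabs; destruct (Rcase_abs (x p)); lra.
  + move=> hA /=. have E0 : rk ord0 = inord 0.
    { apply: ord_inj. rewrite inordK //. by move/eqP: hA. }
    have -> : pi (inord 0) = ord0 by rewrite -E0 pi_rk.
    exact: (prod_pos (sgn_pm (x0 ord0)) H0 (sgn_abs nz0)).
- move=> [Hp HA]. split.
  + suff h : 0 < sgn (x0 ord0) * x ord0.
    { exact: (prod_pos2 (sgn_pm (x0 ord0)) h (sgn_abs nz0)). }
    case: (boolP (nat_of_ord (rk ord0) == 0%nat)) => hA.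
    * have E0 : rk ord0 = inord 0.
      { apply: ord_inj. rewrite inordK //. by move/eqP: hA. }
      have := HA hA. cbv beta. by rewrite -E0 pi_rk.
    * have hm : (0 < rk ord0)%nat by rewrite lt0n.
      have := Hp 0%nat (rk ord0) hm (ltn_ord (rk ord0)). cbv beta.
      rewrite inord_val pi_rk. have := Rabs_pos (sgn (x0 (pi (inord 0))) * x (pi (inord 0))). lra.
  + have aux2 : forall p q, (rk p < rk q)%nat ->
      0 < (x q - x p) * (x0 q - x0 p) /\ 0 < (x q + x p) * (x0 q + x0 p).
    { move=> p q h. have := Hp (rk p) (rk q) h (ltn_ord (rk q)). cbv beta.
      rewrite !inord_val !pi_rk abs_sgn => hh.
      have := Rle_abs (x p). have := Rle_abs (- x p). rewrite Rabs_Ropp => r1 r2.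
      apply: aux h _ _; case: (sgn_pm (x0 q)) hh => -> hh; lra. }
    move=> i j hij. have [h|h|h] := ltngtP (rk i) (rk j).
    * have [a b] := aux2 i j h. split.
      -- replace ((x i - x j) * (x0 i - x0 j)) with ((x j - x i) * (x0 j - x0 i)) by ring. exact a.
      -- replace ((x i + x j) * (x0 i + x0 j)) with ((x j + x i) * (x0 j + x0 i)) by ring. exact b.
    * exact: aux2 j i h.
    * exfalso. move/negP: hij; apply. apply/eqP. have := ord_inj h. move=> E.
      by rewrite -(pi_rk i) E pi_rk.
Qed.

Close Scope R_scope.
Unset Implicit Arguments.

Theorem lemma3p1 (n : nat) (hn : (1 <= n)%N) (C : pt n -> Prop) :
  is_chamber C -> open_simplicial_cone C.
Proof.
move=> HC. have HC' := HC. case: HC' => [[x0 Cx0] [Ccomp _]].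
have Heq := chamber_eq HC Cx0. have x0c := Ccomp x0 Cx0.
have dist : forall p q, p != q -> Rabs (x0 p) <> Rabs (x0 q).
{ move=> p q ne. have [d1 d2] := compl_ne x0c ne.
  unfold Rabs; destruct (Rcase_abs (x0 p)); destruct (Rcase_abs (x0 q)); lra. }
have hlt := rk_lt_inv dist.
have rinj : injective (rk x0).
{ move=> p q E. case: (eqVneq p q) => // ne. exfalso.
  have := dist p q ne. destruct (Rtotal_order (Rabs (x0 p)) (Rabs (x0 q))) as [a|[a|a]] => // _.
  - have := rk_lt a. by rewrite E ltnn.
  - have := rk_lt a. by rewrite E ltnn. }
set pi := invF rinj.
have pi_rk : forall i, pi (rk x0 i) = i := invF_f rinj.
have rk_pi : forall m, rk x0 (pi m) = m := f_invF rinj.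
have [W [Wind Wdesc]] := std_cone hn (nat_of_ord (rk x0 ord0) == 0%nat).
exists (fun (k i : 'I_n.+1) => (sgn (x0 i) * W k (rk x0 i))%R). split.
- move=> c H. apply: Wind => m. have := H (pi m). rewrite rsum_scal rk_pi => E.
  case: (sgn_pm (x0 (pi m))) => hs; rewrite hs in E; lra.
- move=> x. rewrite Heq (key pi_rk rk_pi hlt x0c x) Wdesc.
  split; move=> [c [hc hx]]; exists c; split => //.
  + move=> i. have := hx (rk x0 i). cbv beta. rewrite inord_val pi_rk rsum_scal => E.
    rewrite -E. case: (sgn_pm (x0 i)) => ->; ring.
  + move=> m. cbv beta. rewrite inord_val hx rsum_scal rk_pi.
    case: (sgn_pm (x0 (pi m))) => ->; ring.
Qed.
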